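(* Let $c\in\mathbb{R}$. There is no function $U$ on $\mathbb{T}$ such that: $U$ is $C^1$ on $\mathbb{T}$ except at a single point $x_0\in\mathbb{T}$, where $U$ and $U'$ possess one-sided limits and $U$ is discontinuous (i.e. the one-sided limits of $U$ at $x_0$ differ); $U$ satisfies, for some constant $\gamma\in\mathbb{R}$, the profile equation $-cU+\tfrac{U^2}{2}+(1-\partial_x^2)^{-1}U=\gamma$ on $\mathbb{T}$; and $U$ satisfies the Rankine–Hugoniot condition $U(x_0-0)+U(x_0+0)=2c$. In other words, the Fornberg–Whitham equation $u_t+uu_x+(1-\partial_x^2)^{-1}u_x=0$ on $\mathbb{T}$ has no periodic traveling wave solution $u(x,t)=U(x-ct)$ with a single shock.
   Context: $\mathbb{T}=\mathbb{R}/\mathbb{Z}$, functions on $\mathbb{T}$ identified with $1$-periodic functions on $\mathbb{R}$. $(1-\partial_x^2)^{-1}U=K\ast U$, where $K$ is given on $[0,1]$ by $K(x)=\frac{\sqrt e}{e-1}\cosh(x-\tfrac12)$ and extended periodically; $U(x_0\mp0)$ denote the one-sided limits of $U$ at $x_0$ from the left and right. *)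

(* Defs.v *)
From Stdlib Require Import Reals.
From Coquelicot Require Import Coquelicot.
Open Scope R_scope.

(* Functions on T = R/Z are 1-periodic functions on R. *)
Definition periodic1 (U : R -> R) : Prop := forall x : R, U (x + 1) = U x.

Definition same_point_T (x x0 : R) : Prop := exists k : Z, x = x0 + IZR k.

(* Kernel of (1 - d_x^2)^{-1} on T: K(x) = sqrt e/(e-1) cosh(x - 1/2) on [0,1],
   extended 1-periodically (via the fractional part). *)
Definition K (x : R) : R :=
  sqrt (exp 1) / (exp 1 - 1) * cosh (frac_part x - 1 / 2).

Definition Kconv (U : R -> R) (x : R) : R :=
  RInt (fun y => K (x - y) * U y) 0 1.

(* Main.v *)
Require Import Defs.
From Stdlib Require Import Reals.
From Coquelicot Require Import Coquelicot.
From Stdlib Require Import Lra Lia ZArith.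
Open Scope R_scope.


Lemma ballR (x y : R) (eps : R) : ball x eps y <-> Rabs (y - x) < eps.
Proof. unfold ball; simpl; unfold AbsRing_ball, abs, minus, plus, opp; simpl. tauto. Qed.

Lemma periodicZ (U : R -> R) : periodic1 U -> forall (n : Z) x, U (x + IZR n) = U x.
Proof.
  intros HU.
  assert (Hn : forall (m : nat) x, U (x + INR m) = U x).
  { induction m as [|m IH]; intros x.
    - simpl. f_equal. ring.
    - rewrite S_INR. replace (x + (INR m + 1)) with ((x + INR m) + 1) by ring.
      rewrite HU. apply IH. }
  intros n x. destruct n as [|p|p].
  - simpl. f_equal. ring.
  - rewrite <- positive_nat_Z, <- INR_IZR_INZ. apply Hn.
  - replace (IZR (Z.neg p)) with (- INR (Pos.to_nat p)).
    + rewrite <- (Hn (Pos.to_nat p) (x + - INR (Pos.to_nat p))). f_equal. ring.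
    + rewrite <- Pos2Z.opp_pos, opp_IZR, <- positive_nat_Z, <- INR_IZR_INZ. ring.
Qed.

Lemma shift_right (a d : R) : filterlim (fun y => y + d) (at_right a) (at_right (a + d)).
Proof.
  intros P [eps HP]. exists eps. intros y Hy Hay. apply HP.
  - apply ballR. apply ballR in Hy. replace (y + d - (a + d)) with (y - a) by ring. exact Hy.
  - lra.
Qed.

Lemma shift_left (a d : R) : filterlim (fun y => y + d) (at_left a) (at_left (a + d)).
Proof.
  intros P [eps HP]. exists eps. intros y Hy Hay. apply HP.
  - apply ballR. apply ballR in Hy. replace (y + d - (a + d)) with (y - a) by ring. exact Hy.
  - lra.
Qed.

Lemma limR_Z (U : R -> R) x0 l : periodic1 U -> filterlim U (at_right x0) (locally l) ->
  forall n : Z, filterlim U (at_right (x0 + IZR n)) (locally l).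
Proof.
  intros HU Hl n.
  apply filterlim_ext with (f := fun y => U (y + IZR (- n))).
  { intros y. apply periodicZ; auto. }
  eapply filterlim_comp; [apply shift_right|].
  replace (x0 + IZR n + IZR (- n)) with x0 by (rewrite opp_IZR; ring). exact Hl.
Qed.

Lemma limL_Z (U : R -> R) x0 l : periodic1 U -> filterlim U (at_left x0) (locally l) ->
  forall n : Z, filterlim U (at_left (x0 + IZR n)) (locally l).
Proof.
  intros HU Hl n.
  apply filterlim_ext with (f := fun y => U (y + IZR (- n))).
  { intros y. apply periodicZ; auto. }
  eapply filterlim_comp; [apply shift_left|].
  replace (x0 + IZR n + IZR (- n)) with x0 by (rewrite opp_IZR; ring). exact Hl.
Qed.

Lemma good_between x0 y (n : Z) : x0 + IZR n < y < x0 + IZR n + 1 -> ~ same_point_T y x0.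
Proof.
  intros H [k Hk]. subst y.
  assert (H1 : (n < k)%Z) by (apply lt_IZR; lra).
  assert (H2 : (k < n + 1)%Z) by (apply lt_IZR; rewrite plus_IZR; simpl; lra).
  lia.
Qed.

Lemma good_interval x0 x : ~ same_point_T x x0 -> exists n : Z, x0 + IZR n < x < x0 + IZR n + 1.
Proof.
  intros H. exists (Int_part (x - x0)).
  destruct (base_Int_part (x - x0)) as [H1 H2].
  destruct (Req_dec (IZR (Int_part (x - x0))) (x - x0)) as [E|E].
  - exfalso. apply H. exists (Int_part (x - x0)). lra.
  - lra.
Qed.

Lemma good_locally x0 x : ~ same_point_T x x0 -> locally x (fun y => ~ same_point_T y x0).
Proof.
  intros H. destruct (good_interval x0 x H) as [n Hn].
  assert (Hp : 0 < Rmin (x - (x0 + IZR n)) (x0 + IZR n + 1 - x)) by (apply Rmin_pos; lra).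
  exists (mkposreal _ Hp). intros y Hy0.
  assert (Hy : Rabs (y - x) < Rmin (x - (x0 + IZR n)) (x0 + IZR n + 1 - x)) by (apply ballR; exact Hy0).
  apply (good_between _ _ n).
  assert (Ha := Rmin_l (x - (x0 + IZR n)) (x0 + IZR n + 1 - x)).
  assert (Hb := Rmin_r (x - (x0 + IZR n)) (x0 + IZR n + 1 - x)).
  apply Rabs_def2 in Hy. lra.
Qed.

Lemma at_right_le x : filter_le (at_right x) (locally x).
Proof. apply filter_le_within. Qed.
Lemma at_left_le x : filter_le (at_left x) (locally x).
Proof. apply filter_le_within. Qed.

Lemma lim_mult (F : (R -> Prop) -> Prop) {FF : Filter F} (phi u : R -> R) a l :
  filterlim phi F (locally a) -> filterlim u F (locally l) ->
  filterlim (fun y => phi y * u y) F (locally (a * l)).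
Proof.
  intros H1 H2.
  apply (filterlim_comp_2 phi u Rmult H1 H2).
  apply (filterlim_mult (K := R_AbsRing) a l).
Qed.


Lemma pc_int (f : R -> R) (a b la lb : R) : a < b ->
  (forall x, a < x < b -> continuous f x) ->
  filterlim f (at_right a) (locally la) -> filterlim f (at_left b) (locally lb) ->
  ex_RInt f a b.
Proof.
  intros Hab Hc Hla Hlb.
  set (g := fun y : R => (if Rle_dec y a then la else if Rle_dec b y then lb else f y) : R).
  apply ex_RInt_ext with g.
  { rewrite Rmin_left, Rmax_right by lra. intros x Hx. unfold g.
    destruct (Rle_dec x a); [lra|]. destruct (Rle_dec b x); [lra|]. reflexivity. }
  apply (ex_RInt_continuous (V := R_CompleteNormedModule)). rewrite Rmin_left, Rmax_right by lra.
  intros z Hz.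
  destruct (Req_dec z a) as [Ea|Na].
  { subst z. unfold continuous.
    replace (g a) with la by (unfold g; destruct (Rle_dec a a); lra).
    apply filterlim_locally. intros eps.
    destruct (proj1 (filterlim_locally _ _) Hla eps) as [d Hd].
    assert (Hp : 0 < Rmin d (b - a)) by (apply Rmin_pos; [apply cond_pos|lra]).
    exists (mkposreal _ Hp). intros y Hy0.
    assert (Hy : Rabs (y - a) < Rmin d (b - a)) by (apply ballR; exact Hy0).
    assert (H1 := Rmin_l d (b - a)). assert (H2 := Rmin_r d (b - a)).
    apply Rabs_def2 in Hy.
    unfold g. destruct (Rle_dec y a). { apply ball_center. }
    destruct (Rle_dec b y). { lra. }
    apply Hd; [|lra]. apply ballR. apply Rabs_def1; lra. }
  destruct (Req_dec z b) as [Eb|Nb].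
  { subst z. unfold continuous.
    replace (g b) with lb by (unfold g; destruct (Rle_dec b a); [lra|]; destruct (Rle_dec b b); lra).
    apply filterlim_locally. intros eps.
    destruct (proj1 (filterlim_locally _ _) Hlb eps) as [d Hd].
    assert (Hp : 0 < Rmin d (b - a)) by (apply Rmin_pos; [apply cond_pos|lra]).
    exists (mkposreal _ Hp). intros y Hy0.
    assert (Hy : Rabs (y - b) < Rmin d (b - a)) by (apply ballR; exact Hy0).
    assert (H1 := Rmin_l d (b - a)). assert (H2 := Rmin_r d (b - a)).
    apply Rabs_def2 in Hy.
    unfold g. destruct (Rle_dec y a). { lra. }
    destruct (Rle_dec b y). { apply ball_center. }
    apply Hd; [|lra]. apply ballR. apply Rabs_def1; lra. }
  apply continuous_ext_loc with f.
  - assert (Hp : 0 < Rmin (z - a) (b - z)) by (apply Rmin_pos; lra).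
    exists (mkposreal _ Hp). intros y Hy0.
    assert (Hy : Rabs (y - z) < Rmin (z - a) (b - z)) by (apply ballR; exact Hy0).
    assert (H1 := Rmin_l (z - a) (b - z)). assert (H2 := Rmin_r (z - a) (b - z)).
    apply Rabs_def2 in Hy.
    unfold g. destruct (Rle_dec y a); [lra|]. destruct (Rle_dec b y); [lra|]. reflexivity.
  - apply Hc. lra.
Qed.

Lemma INT (f : R -> R) x0 :
  (forall x, ~ same_point_T x x0 -> continuous f x) ->
  (forall n : Z, exists l : R, filterlim f (at_right (x0 + IZR n)) (locally l)) ->
  (forall n : Z, exists l : R, filterlim f (at_left (x0 + IZR n)) (locally l)) ->
  forall a b, ex_RInt f a b.
Proof.
  intros Hc HR HL.
  assert (Hseg : forall n : Z, ex_RInt f (x0 + IZR n) (x0 + IZR n + 1)).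
  { intros n. destruct (HR n) as [l1 H1]. destruct (HL (n + 1)%Z) as [l2 H2].
    rewrite plus_IZR in H2. simpl in H2. replace (x0 + (IZR n + 1)) with (x0 + IZR n + 1) in H2 by ring.
    apply (pc_int f _ _ l1 l2); [lra| |exact H1|exact H2].
    intros x Hx. apply Hc. apply (good_between _ _ n). exact Hx. }
  assert (Hm : forall m : nat, ex_RInt f (x0 - INR m) (x0 + INR m)).
  { induction m as [|m IH].
    - simpl. replace (x0 - 0) with (x0 + 0) by ring. apply ex_RInt_point.
    - apply ex_RInt_Chasles with (x0 - INR m).
      + assert (Hs := Hseg (- Z.of_nat (S m))%Z).
        rewrite opp_IZR, <- INR_IZR_INZ, S_INR in Hs.
        replace (x0 + - (INR m + 1)) with (x0 - INR (S m)) in Hs by (rewrite S_INR; ring).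
        replace (x0 - INR (S m) + 1) with (x0 - INR m) in Hs by (rewrite S_INR; ring).
        exact Hs.
      + apply ex_RInt_Chasles with (x0 + INR m); [exact IH|].
        assert (Hs := Hseg (Z.of_nat m)). rewrite <- INR_IZR_INZ in Hs.
        rewrite S_INR. replace (x0 + (INR m + 1)) with (x0 + INR m + 1) by ring. exact Hs. }
  assert (Hab : forall a b, a <= b -> ex_RInt f a b).
  { intros a b Hab.
    set (m := Z.abs_nat (up (Rabs (a - x0) + Rabs (b - x0)))).
    assert (HmR : Rabs (a - x0) + Rabs (b - x0) < INR m).
    { unfold m. rewrite INR_IZR_INZ, Nat2Z.inj_abs_nat.
      destruct (archimed (Rabs (a - x0) + Rabs (b - x0))) as [H1 _].
      assert (IZR (up (Rabs (a - x0) + Rabs (b - x0))) <= IZR (Z.abs (up (Rabs (a - x0) + Rabs (b - x0))))).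
      { apply IZR_le. lia. }
      lra. }
    assert (Ha := Rabs_pos (a - x0)). assert (Hb := Rabs_pos (b - x0)).
    assert (Ha' := Rle_abs (-(a - x0))). rewrite Rabs_Ropp in Ha'.
    assert (Hb' := Rle_abs (b - x0)).
    apply (ex_RInt_Chasles_2 (V := R_CompleteNormedModule)) with (x0 - INR m); [lra|].
    apply (ex_RInt_Chasles_1 (V := R_CompleteNormedModule)) with (x0 + INR m); [lra|].
    apply Hm. }
  intros a b. destruct (Rle_dec a b) as [H|H].
  - apply Hab; exact H.
  - apply ex_RInt_swap. apply Hab. lra.
Qed.


Definition Hyp (U : R -> R) (x0 UL UR : R) : Prop :=
  periodic1 U /\ (forall x, ~ same_point_T x x0 -> continuous U x) /\
  filterlim U (at_left x0) (locally UL) /\ filterlim U (at_right x0) (locally UR).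

Lemma good_m1 x0 x : ~ same_point_T x x0 -> ~ same_point_T (x - 1) x0.
Proof. intros H [k Hk]. apply H. exists (k + 1)%Z. rewrite plus_IZR. simpl. lra. Qed.

Lemma int_phiU U x0 UL UR (phi : R -> R) : Hyp U x0 UL UR -> (forall x, continuous phi x) ->
  forall a b, ex_RInt (fun y => phi y * U y) a b.
Proof.
  intros [Hp [Hc [HL HR]]] Hphi.
  apply (INT _ x0).
  - intros x Hx. apply (continuous_mult (K := R_AbsRing) phi U). apply Hphi. apply Hc, Hx.
  - intros n. exists (phi (x0 + IZR n) * UR). apply (lim_mult (at_right (x0 + IZR n))).
    + apply (filterlim_filter_le_1 (F := locally (x0 + IZR n))). apply at_right_le. apply Hphi.
    + apply limR_Z; auto.
  - intros n. exists (phi (x0 + IZR n) * UL). apply (lim_mult (at_left (x0 + IZR n))).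
    + apply (filterlim_filter_le_1 (F := locally (x0 + IZR n))). apply at_left_le. apply Hphi.
    + apply limL_Z; auto.
Qed.

Lemma cont_d (f : R -> R) x : ex_derive f x -> continuous f x.
Proof. intros H. exact (ex_derive_continuous (K := R_AbsRing) (V := R_NormedModule) f x H). Qed.

Lemma F_split (h : R -> R) x : (forall a b, ex_RInt h a b) ->
  RInt h (x - 1) x = RInt h 0 x - RInt h 0 (x - 1).
Proof.
  intros Hi. rewrite <- (RInt_Chasles h (x - 1) 0 x) by auto.
  rewrite <- (opp_RInt_swap h 0 (x - 1)) by auto.
  unfold plus, opp; simpl. ring.
Qed.

Lemma F_cont (h : R -> R) x : (forall a b, ex_RInt h a b) ->
  continuous (fun x => RInt h (x - 1) x) x.
Proof.
  intros Hi.
  apply continuous_ext with (f := fun x => minus (RInt h 0 x) (RInt h 0 (x - 1))).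
  { intros y. rewrite F_split by auto. reflexivity. }
  assert (HC : forall z, continuous (RInt h 0) z).
  { intros z. apply continuous_RInt_1 with h 0. apply filter_forall. intros w. apply (RInt_correct (V := R_CompleteNormedModule)). auto. }
  apply (@continuous_minus R_UniformSpace R_AbsRing R_NormedModule). apply HC.
  apply continuous_comp with (f := fun x => x - 1) (g := RInt h 0).
  - apply cont_d. auto_derive. auto.
  - apply HC.
Qed.

Lemma F_deriv (h : R -> R) x : (forall a b, ex_RInt h a b) ->
  continuous h x -> continuous h (x - 1) ->
  is_derive (fun x => RInt h (x - 1) x) x (h x - h (x - 1)).
Proof.
  intros Hi H1 H2.
  apply is_derive_ext with (f := fun x => minus (RInt h 0 x) (RInt h 0 (x - 1))).
  { intros y. rewrite F_split by auto. reflexivity. }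
  assert (HD : forall z, continuous h z -> is_derive (RInt h 0) z (h z)).
  { intros z Hz. apply is_derive_RInt with 0; auto. apply filter_forall. intros w. apply (RInt_correct (V := R_CompleteNormedModule)). auto. }
  replace (h x - h (x - 1)) with (minus (h x) (scal 1 (h (x - 1)))).
  2:{ unfold minus, plus, opp, scal; simpl; unfold mult; simpl. ring. }
  apply (@is_derive_minus R_AbsRing R_NormedModule). apply HD, H1.
  apply (@is_derive_comp R_AbsRing R_NormedModule (RInt h 0) (fun x => x - 1)).
  - apply HD, H2.
  - auto_derive; [auto|ring].
Qed.


Definition C2 : R := sqrt (exp 1) / (exp 1 - 1) / 2.
Definition gp (U : R -> R) (y : R) : R := exp y * U y.
Definition gm (U : R -> R) (y : R) : R := exp (- y) * U y.
Definition Fp U x := RInt (gp U) (x - 1) x.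
Definition Fm U x := RInt (gm U) (x - 1) x.
Definition Wt U x := C2 * (exp (x - 1/2) * Fm U x + exp (1/2 - x) * Fp U x).
Definition Gt U x := C2 * (exp (x - 1/2) * Fm U x - exp (1/2 - x) * Fp U x).

Lemma exp_sum a b : exp (a + b) = exp a * exp b.
Proof. apply exp_plus. Qed.

Lemma e_half : exp 1 = exp (1/2) * exp (1/2).
Proof. rewrite <- exp_plus. f_equal. field. Qed.

Lemma s_gt1 : 1 < exp (1/2).
Proof. assert (H := exp_increasing 0 (1/2)). rewrite exp_0 in H. apply H. lra. Qed.

Lemma C2_eq : C2 = exp (1/2) / (exp (1/2) * exp (1/2) - 1) / 2.
Proof.
  unfold C2. rewrite e_half. rewrite sqrt_square; auto. left; apply exp_pos.
Qed.

Lemma C2_key : 2 * C2 * (exp (1/2) - / exp (1/2)) = 1.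
Proof.
  rewrite C2_eq. assert (H := s_gt1). field. split; nra.
Qed.

Lemma gp_int U x0 UL UR : Hyp U x0 UL UR -> forall a b, ex_RInt (gp U) a b.
Proof.
  intros H. apply (int_phiU U x0 UL UR exp H). intros x. apply cont_d. auto_derive. auto.
Qed.

Lemma gm_int U x0 UL UR : Hyp U x0 UL UR -> forall a b, ex_RInt (gm U) a b.
Proof.
  intros H. apply (int_phiU U x0 UL UR (fun y => exp (- y)) H). intros x. apply cont_d. auto_derive. auto.
Qed.

Lemma perm1 U x : periodic1 U -> U (x - 1) = U x.
Proof. intros H. rewrite <- (H (x - 1)). f_equal. ring. Qed.

Lemma Fp_deriv U x0 UL UR x : Hyp U x0 UL UR -> ~ same_point_T x x0 ->
  is_derive (Fp U) x ((exp x - exp (x - 1)) * U x).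
Proof.
  intros H Hx. pose proof H as [Hp [Hc Hl]].
  replace ((exp x - exp (x - 1)) * U x) with (gp U x - gp U (x - 1)).
  2:{ unfold gp. rewrite (perm1 U x) by auto. ring. }
  apply F_deriv.
  - apply (gp_int U x0 UL UR H).
  - apply (continuous_mult (K := R_AbsRing) exp U). apply cont_d. auto_derive. auto. apply Hc, Hx.
  - apply (continuous_mult (K := R_AbsRing) exp U). apply cont_d. auto_derive. auto. apply Hc, good_m1, Hx.
Qed.

Lemma Fm_deriv U x0 UL UR x : Hyp U x0 UL UR -> ~ same_point_T x x0 ->
  is_derive (Fm U) x ((exp (- x) - exp (- (x - 1))) * U x).
Proof.
  intros H Hx. pose proof H as [Hp [Hc Hl]].
  replace ((exp (- x) - exp (- (x - 1))) * U x) with (gm U x - gm U (x - 1)).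
  2:{ unfold gm. rewrite (perm1 U x) by auto. ring. }
  apply F_deriv.
  - apply (gm_int U x0 UL UR H).
  - apply (continuous_mult (K := R_AbsRing) (fun y => exp (- y)) U). apply cont_d. auto_derive. auto. apply Hc, Hx.
  - apply (continuous_mult (K := R_AbsRing) (fun y => exp (- y)) U). apply cont_d. auto_derive. auto. apply Hc, good_m1, Hx.
Qed.

Ltac expnorm x :=
  let X := fresh "X" in let s := fresh "s" in
  repeat match goal with
  | |- context [exp (x + - (1/2))] => rewrite (exp_sum x (- (1/2)))
  | |- context [exp (1/2 + - x)] => rewrite (exp_sum (1/2) (- x))
  | |- context [exp (- (x + - (1)))] => replace (- (x + - (1))) with (1/2 + 1/2 + - x) by field; rewrite (exp_sum (1/2 + 1/2) (- x)), (exp_sum (1/2) (1/2))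
  | |- context [exp (x + - (1))] => replace (x + - (1)) with (x + - (1/2) + - (1/2)) by field; rewrite (exp_sum (x + - (1/2)) (- (1/2))), (exp_sum x (- (1/2)))
  end;
  rewrite ?exp_Ropp;
  set (X := exp x); set (s := exp (1/2));
  assert (HX : 0 < X) by apply exp_pos; assert (Hs : 1 < s) by apply s_gt1.

Lemma Wt_deriv U x0 UL UR x : Hyp U x0 UL UR -> ~ same_point_T x x0 ->
  is_derive (Wt U) x (Gt U x).
Proof.
  intros H Hx. unfold Wt. auto_derive.
  { split. eexists; apply (Fm_deriv U x0 UL UR x H Hx). split; auto. eexists; apply (Fp_deriv U x0 UL UR x H Hx). }
  replace (Derive (fun x0 : R => Fm U x0) x) with ((exp (- x) - exp (- (x - 1))) * U x).
  2:{ symmetry. apply is_derive_unique. apply (Fm_deriv U x0 UL UR x H Hx). }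
  replace (Derive (fun x0 : R => Fp U x0) x) with ((exp x - exp (x - 1)) * U x).
  2:{ symmetry. apply is_derive_unique. apply (Fp_deriv U x0 UL UR x H Hx). }
  unfold Gt. unfold Rminus. expnorm x. field. split; lra.
Qed.

Lemma Gt_deriv U x0 UL UR x : Hyp U x0 UL UR -> ~ same_point_T x x0 ->
  is_derive (Gt U) x (Wt U x - U x).
Proof.
  intros H Hx. unfold Gt. auto_derive.
  { split. eexists; apply (Fm_deriv U x0 UL UR x H Hx). split; auto. eexists; apply (Fp_deriv U x0 UL UR x H Hx). }
  replace (Derive (fun x0 : R => Fm U x0) x) with ((exp (- x) - exp (- (x - 1))) * U x).
  2:{ symmetry. apply is_derive_unique. apply (Fm_deriv U x0 UL UR x H Hx). }
  replace (Derive (fun x0 : R => Fp U x0) x) with ((exp x - exp (x - 1)) * U x).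
  2:{ symmetry. apply is_derive_unique. apply (Fp_deriv U x0 UL UR x H Hx). }
  unfold Wt. rewrite C2_eq. unfold Rminus in *. expnorm x.
  field. repeat split; nra.
Qed.

Lemma cR_mult (f g : R -> R) x : continuous f x -> continuous g x -> continuous (fun y => f y * g y) x.
Proof. intros; apply (continuous_mult (K := R_AbsRing) f g); auto. Qed.
Lemma cR_minus (f g : R -> R) x : continuous f x -> continuous g x -> continuous (fun y => f y - g y) x.
Proof. intros; apply (@continuous_minus R_UniformSpace R_AbsRing R_NormedModule f g); auto. Qed.
Lemma cR_plus (f g : R -> R) x : continuous f x -> continuous g x -> continuous (fun y => f y + g y) x.
Proof. intros; apply (@continuous_plus R_UniformSpace R_AbsRing R_NormedModule f g); auto. Qed.
Lemma cR_const (c x : R) : continuous (fun _ : R => c) x.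
Proof. apply cont_d. auto_derive. auto. Qed.

Lemma Gt_cont U x0 UL UR x : Hyp U x0 UL UR -> continuous (Gt U) x.
Proof.
  intros H. unfold Gt.
  apply cR_mult. apply cR_const.
  apply cR_minus; apply cR_mult.
  - apply cont_d. auto_derive. auto.
  - apply (F_cont (gm U) x (gm_int U x0 UL UR H)).
  - apply cont_d. auto_derive. auto.
  - apply (F_cont (gp U) x (gp_int U x0 UL UR H)).
Qed.

Lemma RInt_extR (f g : R -> R) (a b : R) :
  (forall x, Rmin a b < x < Rmax a b -> f x = g x) -> RInt f a b = RInt g a b.
Proof. apply RInt_ext. Qed.

Lemma RInt_shift (h : R -> R) (v a b : R) : (forall a b, ex_RInt h a b) ->
  RInt h (a + v) (b + v) = RInt (fun y => h (y + v)) a b.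
Proof.
  intros Hi. assert (E := RInt_comp_lin h 1 v a b (Hi _ _)).
  replace (1 * a + v) with (a + v) in E by ring.
  replace (1 * b + v) with (b + v) in E by ring.
  rewrite <- E. apply RInt_extR. intros y _. unfold scal; simpl; unfold mult; simpl.
  rewrite Rmult_1_l. f_equal. ring.
Qed.

Lemma RInt_scalR (h : R -> R) (k a b : R) : ex_RInt h a b ->
  RInt (fun y => k * h y) a b = k * RInt h a b.
Proof. intros Hi. exact (RInt_scal h a b k Hi). Qed.

Lemma Fp_per U x0 UL UR x : Hyp U x0 UL UR -> Fp U (x + 1) = exp 1 * Fp U x.
Proof.
  intros H. pose proof H as [Hp _]. unfold Fp.
  replace (x + 1 - 1) with ((x - 1) + 1) by ring.
  rewrite (RInt_shift (gp U) 1 (x - 1) x (gp_int U x0 UL UR H)).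
  rewrite <- RInt_scalR by apply (gp_int U x0 UL UR H).
  apply RInt_extR. intros y _. unfold gp. rewrite Hp, exp_sum. ring.
Qed.

Lemma Fm_per U x0 UL UR x : Hyp U x0 UL UR -> Fm U (x + 1) = / exp 1 * Fm U x.
Proof.
  intros H. pose proof H as [Hp _]. unfold Fm.
  replace (x + 1 - 1) with ((x - 1) + 1) by ring.
  rewrite (RInt_shift (gm U) 1 (x - 1) x (gm_int U x0 UL UR H)).
  rewrite <- RInt_scalR by apply (gm_int U x0 UL UR H).
  apply RInt_extR. intros y _. unfold gm. rewrite Hp.
  replace (- (y + 1)) with (- y + - (1)) by ring. rewrite exp_sum, (exp_Ropp 1). ring.
Qed.

Lemma Wt_per U x0 UL UR x : Hyp U x0 UL UR -> Wt U (x + 1) = Wt U x.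
Proof.
  intros H. unfold Wt. rewrite (Fp_per U x0 UL UR x H), (Fm_per U x0 UL UR x H).
  replace (x + 1 - 1/2) with ((x - 1/2) + 1) by ring. rewrite exp_sum.
  replace (1/2 - (x + 1)) with ((1/2 - x) + - (1)) by ring. rewrite exp_sum, exp_Ropp.
  assert (0 < exp 1) by apply exp_pos. field. lra.
Qed.

Lemma Gt_per U x0 UL UR x : Hyp U x0 UL UR -> Gt U (x + 1) = Gt U x.
Proof.
  intros H. unfold Gt. rewrite (Fp_per U x0 UL UR x H), (Fm_per U x0 UL UR x H).
  replace (x + 1 - 1/2) with ((x - 1/2) + 1) by ring. rewrite exp_sum.
  replace (1/2 - (x + 1)) with ((1/2 - x) + - (1)) by ring. rewrite exp_sum, exp_Ropp.
  assert (0 < exp 1) by apply exp_pos. field. lra.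
Qed.


Lemma frac_id z : 0 <= z < 1 -> frac_part z = z.
Proof. intros H. symmetry. apply (proj2 (Int_part_frac_part_spec z 0 z H ltac:(simpl; ring))). Qed.

Lemma frac_neg z : -1 <= z < 0 -> frac_part z = z + 1.
Proof. intros H. symmetry. apply (proj2 (Int_part_frac_part_spec z (-1) (z + 1) ltac:(lra) ltac:(simpl; ring))). Qed.

Lemma frac_p1 z : frac_part (z + 1) = frac_part z.
Proof.
  symmetry. refine (proj2 (Int_part_frac_part_spec (z + 1) (Int_part z + 1) (frac_part z) _ _)).
  - destruct (base_fp z). lra.
  - rewrite plus_IZR. rewrite (Rplus_Int_part_frac_part z) at 1. simpl. ring.
Qed.

Lemma Kconv_per U x : Kconv U (x + 1) = Kconv U x.
Proof.
  unfold Kconv. apply RInt_extR. intros y _. unfold K.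
  replace (x + 1 - y) with ((x - y) + 1) by field. rewrite frac_p1. reflexivity.
Qed.

Lemma RInt_plusR (f g : R -> R) a b : ex_RInt f a b -> ex_RInt g a b ->
  RInt (fun y => f y + g y) a b = RInt f a b + RInt g a b.
Proof. intros H1 H2. exact (RInt_plus f g a b H1 H2). Qed.

Lemma ex_lin (f g : R -> R) c al be a b : ex_RInt f a b -> ex_RInt g a b ->
  ex_RInt (fun y => c * (al * f y + be * g y)) a b.
Proof.
  intros H1 H2.
  apply (ex_RInt_scal (V := R_NormedModule) (fun y => al * f y + be * g y) a b c).
  apply (ex_RInt_plus (V := R_NormedModule) (fun y => al * f y) (fun y => be * g y)).
  apply (ex_RInt_scal (V := R_NormedModule) f a b al H1).
  apply (ex_RInt_scal (V := R_NormedModule) g a b be H2).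
Qed.

Lemma RInt_lin (f g : R -> R) c al be a b : ex_RInt f a b -> ex_RInt g a b ->
  RInt (fun y => c * (al * f y + be * g y)) a b = c * (al * RInt f a b + be * RInt g a b).
Proof.
  intros H1 H2. rewrite RInt_scalR.
  2:{ apply (ex_RInt_plus (V := R_NormedModule) (fun y => al * f y) (fun y => be * g y)).
      apply (ex_RInt_scal (V := R_NormedModule) f a b al H1).
      apply (ex_RInt_scal (V := R_NormedModule) g a b be H2). }
  rewrite RInt_plusR.
  2: apply (ex_RInt_scal (V := R_NormedModule) f a b al H1).
  2: apply (ex_RInt_scal (V := R_NormedModule) g a b be H2).
  rewrite !RInt_scalR by auto. reflexivity.
Qed.

Lemma K2 : sqrt (exp 1) / (exp 1 - 1) = 2 * C2.
Proof. unfold C2. field. assert (H := s_gt1). rewrite e_half. nra. Qed.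

Lemma Kconv_Wt01 U x0 UL UR x : Hyp U x0 UL UR -> 0 <= x < 1 -> Kconv U x = Wt U x.
Proof.
  intros H Hx. pose proof H as [Hp _].
  assert (Igp := gp_int U x0 UL UR H). assert (Igm := gm_int U x0 UL UR H).
  set (h := fun y => K (x - y) * U y).
  set (hL := fun y => C2 * (exp (x - 1/2) * gm U y + exp (1/2 - x) * gp U y)).
  set (hR := fun y => C2 * (exp (x + 1/2) * gm U y + exp (-(1/2) - x) * gp U y)).
  assert (EL : forall y, Rmin 0 x < y < Rmax 0 x -> hL y = h y).
  { intros y Hy. rewrite Rmin_left, Rmax_right in Hy by lra.
    unfold h, hL, K, gm, gp. rewrite frac_id by lra. rewrite K2. unfold cosh.
    replace (x - y - 1/2) with ((x - 1/2) + - y) by field.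
    replace (- ((x - 1/2) + - y)) with ((1/2 - x) + y) by field.
    rewrite !exp_sum. field. }
  assert (ER : forall y, Rmin x 1 < y < Rmax x 1 -> hR y = h y).
  { intros y Hy. rewrite Rmin_left, Rmax_right in Hy by lra.
    unfold h, hR, K, gm, gp. rewrite frac_neg by lra. rewrite K2. unfold cosh.
    replace (x - y + 1 - 1/2) with ((x + 1/2) + - y) by field.
    replace (- ((x + 1/2) + - y)) with ((-(1/2) - x) + y) by field.
    rewrite !exp_sum. field. }
  assert (XL : ex_RInt h 0 x).
  { apply (ex_RInt_ext hL); auto. apply ex_lin; auto. }
  assert (XR : ex_RInt h x 1).
  { apply (ex_RInt_ext hR); auto. apply ex_lin; auto. }
  unfold Kconv. fold h.
  rewrite <- (RInt_Chasles h 0 x 1 XL XR).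
  rewrite <- (RInt_extR hL h 0 x EL), <- (RInt_extR hR h x 1 ER).
  unfold hL, hR. rewrite !RInt_lin by auto.
  unfold Wt, Fm, Fp.
  rewrite <- (RInt_Chasles (gm U) (x - 1) 0 x) by auto.
  rewrite <- (RInt_Chasles (gp U) (x - 1) 0 x) by auto.
  assert (Sm : RInt (gm U) (x - 1) 0 = exp 1 * RInt (gm U) x 1).
  { replace (x - 1) with (x + - (1)) by field. replace 0 with (1 + - (1)) by field.
    rewrite RInt_shift by auto.
    rewrite <- RInt_scalR by auto. apply RInt_extR. intros y _. unfold gm.
    replace (y + - (1)) with (y - 1) by field. rewrite (perm1 U y Hp).
    replace (- (y - 1)) with (1 + - y) by field. rewrite exp_sum. ring. }
  assert (Sp : RInt (gp U) (x - 1) 0 = / exp 1 * RInt (gp U) x 1).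
  { replace (x - 1) with (x + - (1)) by field. replace 0 with (1 + - (1)) by field.
    rewrite RInt_shift by auto.
    rewrite <- RInt_scalR by auto. apply RInt_extR. intros y _. unfold gp.
    replace (y + - (1)) with (y - 1) by field. rewrite (perm1 U y Hp).
    replace (y - 1) with (y + - (1)) by field. rewrite exp_sum, (exp_Ropp 1). ring. }
  unfold plus; simpl. rewrite Sm, Sp.
  replace (x + 1/2) with ((x - 1/2) + 1) by field.
  replace (-(1/2) - x) with ((1/2 - x) + - (1)) by field.
  rewrite !exp_sum, (exp_Ropp 1).
  assert (0 < exp 1) by apply exp_pos. field. lra.
Qed.

Lemma Kconv_Wt U x0 UL UR x : Hyp U x0 UL UR -> Kconv U x = Wt U x.
Proof.
  intros H.
  rewrite (Rplus_Int_part_frac_part x). rewrite Rplus_comm.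
  rewrite (periodicZ (Kconv U) (Kconv_per U)).
  rewrite (periodicZ (Wt U) (fun y => Wt_per U x0 UL UR y H)).
  apply (Kconv_Wt01 U x0 UL UR); auto. destruct (base_fp x). lra.
Qed.


Definition Pp (k v : R) : R := v ^ 4 / 8 + v ^ 3 / 3 + k * v ^ 2 / 2.

Lemma lim_uniq (F : (R -> Prop) -> Prop) {FF : ProperFilter F} (f g : R -> R) (l m : R) :
  filterlim f F (locally l) -> filterlim g F (locally m) -> F (fun y => g y = f y) -> l = m.
Proof.
  intros Hf Hg He.
  apply (filterlim_locally_unique (K := R_AbsRing) (V := R_NormedModule) f l m Hf).
  apply (filterlim_ext_loc g f He Hg).
Qed.

Lemma eqR (a b : R) : a = b -> a = b.
Proof. auto. Qed.

Lemma cpt (f : R -> R) x : ex_derive f x -> continuity_pt f x.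
Proof. intros H. apply continuity_pt_filterlim. apply cont_d. exact H. Qed.

Theorem main_aux (c : R) :
  ~ exists (U : R -> R) (x0 gamma UL UR DL DR : R),
      periodic1 U
      /\ (forall x, ~ same_point_T x x0 ->
            ex_derive U x /\ continuous (Derive U) x)
      /\ filterlim U (at_left x0) (locally UL)
      /\ filterlim U (at_right x0) (locally UR)
      /\ filterlim (Derive U) (at_left x0) (locally DL)
      /\ filterlim (Derive U) (at_right x0) (locally DR)
      /\ UL <> UR
      /\ (forall x, ~ same_point_T x x0 ->
            - c * U x + (U x) ^ 2 / 2 + Kconv U x = gamma)
      /\ UL + UR = 2 * c.
Proof.
  intros [U [x0 [gamma [UL [UR [DL [DR [Hp [Hd [HL [HR [_ [_ [Hne [Heq Hrh]]]]]]]]]]]]]]].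
  assert (H : Hyp U x0 UL UR).
  { split; [exact Hp|]. split; [|split; assumption].
    intros x Hx. apply cont_d. apply (proj1 (Hd x Hx)). }
  assert (HeqW : forall x, ~ same_point_T x x0 -> - c * U x + (U x) ^ 2 / 2 + Wt U x = gamma).
  { intros x Hx. rewrite <- (Kconv_Wt U x0 UL UR x H). apply Heq, Hx. }
  assert (S1 : forall x, ~ same_point_T x x0 -> (U x - c) * Derive U x + Gt U x = 0).
  { intros x Hx.
    assert (D1 : is_derive (fun y => - c * U y + (U y) ^ 2 / 2 + Wt U y) x 0).
    { apply is_derive_ext_loc with (f := fun _ => gamma).
      - apply filter_imp with (2 := good_locally x0 x Hx). intros y Hy. symmetry. apply HeqW, Hy.
      - apply (is_derive_const (K := R_AbsRing) (V := R_NormedModule)). }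
    assert (D2 : is_derive (fun y => - c * U y + (U y) ^ 2 / 2 + Wt U y) x ((U x - c) * Derive U x + Gt U x)).
    { auto_derive.
      - repeat split; first [apply (proj1 (Hd x Hx)) | exact (ex_intro _ (Gt U x) (Wt_deriv U x0 UL UR x H Hx))].
      - replace (Derive (fun x0 : R => Wt U x0) x) with (Gt U x).
        2:{ symmetry. apply is_derive_unique. apply (Wt_deriv U x0 UL UR x H Hx). }
        apply eqR. change (Derive (fun x1 : R => U x1) x) with (Derive U x). field. }
    apply is_derive_unique in D1. apply is_derive_unique in D2. rewrite <- D2. exact D1. }
  set (k := c - (gamma + c ^ 2 / 2)).
  set (E := fun y => Gt U y ^ 2 / 2 - Pp k (U y - c)).
  assert (S2 : forall x, ~ same_point_T x x0 -> is_derive E x 0).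
  { intros x Hx. unfold E, Pp. auto_derive.
    - repeat split; first [apply (proj1 (Hd x Hx)) | exact (ex_intro _ _ (Gt_deriv U x0 UL UR x H Hx))].
    - replace (Derive (fun x0 : R => Gt U x0) x) with (Wt U x - U x).
      2:{ symmetry. apply is_derive_unique. apply (Gt_deriv U x0 UL UR x H Hx). }
      assert (E1 := S1 x Hx). assert (E2 := HeqW x Hx).
      replace (Gt U x) with (- ((U x - c) * Derive U x)) by lra.
      replace (Wt U x) with (gamma + c * U x - U x ^ 2 / 2) by lra.
      unfold k. apply eqR. change (Derive (fun x1 : R => U x1) x) with (Derive U x). field. }
  assert (S3 : forall y, x0 < y < x0 + 1 -> E y = E (x0 + 1/2)).
  { intros y Hy.
    assert (Hg : forall z, x0 < z < x0 + 1 -> ~ same_point_T z x0).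
    { intros z Hz. apply (good_between x0 z 0). simpl. lra. }
    destruct (MVT_gen E (x0 + 1/2) y (fun _ => 0)) as [z [Hz1 Hz2]].
    - intros z Hz. apply S2, Hg. assert (Hm1 := Rmin_glb_lt (x0 + 1/2) y x0 ltac:(lra) (proj1 Hy)).
      assert (Hm2 := Rmax_lub_lt (x0 + 1/2) y (x0 + 1) ltac:(lra) (proj2 Hy)). lra.
    - intros z Hz. apply cpt. exists 0. apply S2, Hg.
      assert (Hm1 := Rmin_glb_lt (x0 + 1/2) y x0 ltac:(lra) (proj1 Hy)).
      assert (Hm2 := Rmax_lub_lt (x0 + 1/2) y (x0 + 1) ltac:(lra) (proj2 Hy)). lra.
    - lra. }
  set (E0 := E (x0 + 1/2)).
  assert (S4 : forall y, x0 - 1 < y < x0 -> E y = E0).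
  { intros y Hy. unfold E0. rewrite <- (S3 (y + 1)) by lra. unfold E.
    rewrite (Gt_per U x0 UL UR y H), Hp. reflexivity. }
  set (G0 := Gt U x0 ^ 2 / 2 - E0).
  assert (HG : continuous (fun y => Gt U y ^ 2 / 2 - E0) x0).
  { apply cR_minus; [|apply cR_const].
    apply (continuous_comp (Gt U) (fun g => g ^ 2 / 2)).
    apply (Gt_cont U x0 UL UR x0 H). apply cont_d. auto_derive. auto. }
  assert (HPc : forall v, continuous (fun w => Pp k (w - c)) v).
  { intros v. apply cont_d. unfold Pp. auto_derive. auto. }
  assert (LR : Pp k (UR - c) = G0).
  { apply (lim_uniq (at_right x0) (fun y => Pp k (U y - c)) (fun y => Gt U y ^ 2 / 2 - E0)).
    - apply (filterlim_comp _ _ _ U (fun w => Pp k (w - c)) _ (locally UR)). exact HR. apply HPc.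
    - apply (filterlim_filter_le_1 (F := locally x0)). apply at_right_le. apply HG.
    - exists (mkposreal 1 Rlt_0_1). intros y Hy0 Hy.
      assert (Hy1 : Rabs (y - x0) < 1) by (apply ballR; exact Hy0).
      apply Rabs_def2 in Hy1.
      assert (Ey := S3 y ltac:(lra)). fold E0 in Ey. unfold E in Ey. lra. }
  assert (LL : Pp k (UL - c) = G0).
  { apply (lim_uniq (at_left x0) (fun y => Pp k (U y - c)) (fun y => Gt U y ^ 2 / 2 - E0)).
    - apply (filterlim_comp _ _ _ U (fun w => Pp k (w - c)) _ (locally UL)). exact HL. apply HPc.
    - apply (filterlim_filter_le_1 (F := locally x0)). apply at_left_le. apply HG.
    - exists (mkposreal 1 Rlt_0_1). intros y Hy0 Hy.
      assert (Hy1 : Rabs (y - x0) < 1) by (apply ballR; exact Hy0).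
      apply Rabs_def2 in Hy1.
      assert (Ey := S4 y ltac:(lra)). unfold E in Ey. lra. }
  assert (HUR : UR = 2 * c - UL) by lra.
  rewrite <- LL, HUR in LR. unfold Pp in LR.
  assert (H3 : (UL - c) ^ 3 = 0) by (apply Rmult_eq_reg_l with (2/3); [|lra]; ring_simplify; ring_simplify in LR; lra).
  destruct (Req_dec (UL - c) 0) as [H4|H4]; [apply Hne; lra|]. exact (pow_nonzero _ 3 H4 H3).
Qed.


Theorem mainTheorem4 (c : R) :
  ~ exists (U : R -> R) (x0 gamma UL UR DL DR : R),
      periodic1 U
      /\ (forall x, ~ same_point_T x x0 ->
            ex_derive U x /\ continuous (Derive U) x)
      /\ filterlim U (at_left x0) (locally UL)
      /\ filterlim U (at_right x0) (locally UR)
      /\ filterlim (Derive U) (at_left x0) (locally DL)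
      /\ filterlim (Derive U) (at_right x0) (locally DR)
      /\ UL <> UR
      /\ (forall x, ~ same_point_T x x0 ->
            - c * U x + (U x) ^ 2 / 2 + Kconv U x = gamma)
      /\ UL + UR = 2 * c.
Proof. exact (main_aux c). Qed.
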